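(* Let $G$ be a connected graph of order $n\ge 2$, and let $H$ be a graph of order $m\ge 1$. (a) If $n\ge 4$, then $O_{\rm SR}(G\odot H)=\mathcal{B}$. (b) If $n=3$, then $O_{\rm SR}(G\odot H)=\mathcal{N}$ if $m=1$ and $O_{\rm SR}(G\odot H)=\mathcal{B}$ if $m\ge 2$. (c) If $n=2$, then $O_{\rm SR}(G\odot H)=\mathcal{M}$ if $m=1$ and $O_{\rm SR}(G\odot H)=\mathcal{B}$ if $m\ge 2$.
   Context: All graphs are finite, simple and undirected. For graphs $G$ with $V(G)=\{u_1,\dots,u_n\}$ and $H$, the corona product $G\odot H$ is obtained from $G$ and $n$ disjoint copies $H_1,\dots,H_n$ of $H$ by adding an edge from $u_i$ to every vertex of $H_i$ for each $i$. A set $S\subseteq V(X)$ is a strong resolving set of a connected graph $X$ if for all distinct $x,y\in V(X)$ there exists $z\in S$ such that $x$ lies on a $y$–$z$ geodesic or $y$ lies on an $x$–$z$ geodesic. The Maker–Breaker strong resolving game on $X$: Maker and Breaker alternately select a not-yet-chosen vertex of $X$; Maker wins if the vertices he selects contain a strong resolving set of $X$, Breaker wins otherwise. In the M-game Maker moves first, in the B-game Breaker moves first. $O_{\rm SR}(X)=\mathcal{M}$ if Maker has a winning strategy in both games, $\mathcal{B}$ if Breaker has a winning strategy in both, and $\mathcal{N}$ if the first player has a winning strategy in each. *)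

(* Defs.v *)
From mathcomp Require Import all_boot.
Set Implicit Arguments. Unset Strict Implicit. Unset Printing Implicit Defensive.

Definition simple_graph (V : finType) (e : rel V) : Prop :=
  symmetric e /\ irreflexive e.

Definition connected_graph (V : finType) (e : rel V) : Prop :=
  forall x y : V, connect e x y.

(* Corona product G ⊙ H: vertices inl u (u in G) and inr (u, h) = vertex h of
   the copy H_u of H attached to u. *)
Definition corona_rel (T U : finType) (eG : rel T) (eH : rel U) : rel (T + (T * U)) :=
  fun a b =>
    match a, b with
    | inl u, inl v => eG u v
    | inl u, inr (v, _) => u == v
    | inr (u, _), inl v => u == v
    | inr (u, h), inr (v, h') => (u == v) && eH h h'
    end.

Fixpoint reach (V : finType) (e : rel V) (k : nat) (x y : V) : bool :=
  match k with
  | 0 => x == y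
  | k'.+1 => (x == y) || [exists z, e x z && reach e k' z y]
  end.

(* Shortest-path distance (the least k with a walk of length k; equals #|V|
   when y is unreachable, which does not occur in connected graphs). *)
Definition dist (V : finType) (e : rel V) (x y : V) : nat :=
  find (fun k => reach e k x y) (iota 0 #|V|).

Definition on_geodesic (V : finType) (e : rel V) (y z x : V) : bool :=
  dist e y x + dist e x z == dist e y z.

Definition strong_resolving (V : finType) (e : rel V) (S : {set V}) : bool :=
  [forall x, forall y, (x != y) ==>
     [exists z in S, on_geodesic e y z x || on_geodesic e x z y]].

(* M, B: vertices already chosen by Maker
   and Breaker; mturn: whether Maker is to move; fuel bounds the number of moves. *)
Definition maker_goal (V : finType) (e : rel V) (M : {set V}) : bool :=
  [exists S : {set V}, (S \subset M) && strong_resolving e S].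

Fixpoint maker_wins_from (V : finType) (e : rel V) (fuel : nat)
    (M B : {set V}) (mturn : bool) : bool :=
  let free := ~: (M :|: B) in
  match fuel with
  | 0 => maker_goal e M
  | fuel'.+1 =>
    if free == set0 then maker_goal e M
    else if mturn then [exists v in free, maker_wins_from e fuel' (v |: M) B false]
    else [forall v in free, maker_wins_from e fuel' M (v |: B) true]
  end.

Fixpoint breaker_wins_from (V : finType) (e : rel V) (fuel : nat)
    (M B : {set V}) (mturn : bool) : bool :=
  let free := ~: (M :|: B) in
  match fuel with
  | 0 => ~~ maker_goal e M
  | fuel'.+1 =>
    if free == set0 then ~~ maker_goal e M
    else if mturn then [forall v in free, breaker_wins_from e fuel' (v |: M) B false]
    else [exists v in free, breaker_wins_from e fuel' M (v |: B) true]
  end.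

Definition maker_wins_Mgame (V : finType) (e : rel V) : bool :=
  maker_wins_from e #|V| set0 set0 true.
Definition maker_wins_Bgame (V : finType) (e : rel V) : bool :=
  maker_wins_from e #|V| set0 set0 false.
Definition breaker_wins_Mgame (V : finType) (e : rel V) : bool :=
  breaker_wins_from e #|V| set0 set0 true.
Definition breaker_wins_Bgame (V : finType) (e : rel V) : bool :=
  breaker_wins_from e #|V| set0 set0 false.

Definition outcome_M (V : finType) (e : rel V) : Prop :=
  maker_wins_Mgame e /\ maker_wins_Bgame e.
Definition outcome_B (V : finType) (e : rel V) : Prop :=
  breaker_wins_Mgame e /\ breaker_wins_Bgame e.
Definition outcome_N (V : finType) (e : rel V) : Prop :=
  maker_wins_Mgame e /\ breaker_wins_Bgame e.

(* Main.v *)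
Require Import Defs.
From mathcomp Require Import all_boot zify.
Set Implicit Arguments. Unset Strict Implicit. Unset Printing Implicit Defensive.

Lemma reachS (V : finType) (e : rel V) k x y : reach e k x y -> reach e k.+1 x y.
Proof.
elim: k x => [|k IH] x /=; first by move=> ->.
case/orP=> [->//|/existsP[z /andP[xz rz]]].
apply/orP; right; apply/existsP; exists z; rewrite xz; exact: IH.
Qed.

Lemma reach_add (V : finType) (e : rel V) k j x y : reach e k x y -> reach e (k + j) x y.
Proof.
elim: j => [|j IH]; first by rewrite addn0.
by move=> h; rewrite addnS; apply: reachS; apply: IH.
Qed.

Lemma reach_refl (V : finType) (e : rel V) k x : reach e k x x.
Proof. by case: k => /= [|k]; rewrite eqxx. Qed.

Lemma reach_trans (V : finType) (e : rel V) a b x y z :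
  reach e a x y -> reach e b y z -> reach e (a + b) x z.
Proof.
elim: a x => [|a IH] x; first by move/eqP->.
rewrite [reach e a.+1 x y]/=.
case/orP=> [/eqP-> ryz|/existsP[w /andP[xw rw]] ryz].
  by rewrite addnC; apply: reach_add.
rewrite addSn /=; apply/orP; right; apply/existsP; exists w; rewrite xw.
exact: IH.
Qed.

Lemma reach1 (V : finType) (e : rel V) x y : e x y -> reach e 1 x y.
Proof. by move=> h /=; apply/orP; right; apply/existsP; exists y; rewrite h eqxx. Qed.

Lemma reach_sym (V : finType) (e : rel V) : symmetric e ->
  forall k x y, reach e k x y -> reach e k y x.
Proof.
move=> se; elim=> [|k IH] x y; first by rewrite /= eq_sym.
rewrite [reach e k.+1 x y]/=; case/orP=> [/eqP->|/existsP[w /andP[xw rw]]]; first exact: reach_refl.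
rewrite -addn1; apply: (reach_trans (IH _ _ rw)); apply: reach1; by rewrite se.
Qed.

Lemma reach_path (V : finType) (e : rel V) x p : path e x p -> reach e (size p) x (last x p).
Proof.
elim: p x => [|y p IH] x /=; first by rewrite eqxx.
case/andP=> xy pp; apply/orP; right; apply/existsP; exists y; rewrite xy; exact: IH.
Qed.

Lemma reach_conn (V : finType) (e : rel V) x y : connect e x y ->
  exists2 k, k < #|V| & reach e k x y.
Proof.
case/connectP=> p pp ->.
case/shortenP: pp => q qp uq _.
exists (size q); last exact: reach_path.
have := card_uniqP uq; rewrite /= => h.
have : #|x :: q| <= #|V| by apply: max_card.
by rewrite h.
Qed.


Lemma dist_spec (V : finType) (e : rel V) x y : (forall x y, connect e x y) ->
  reach e (dist e x y) x y /\ (forall k, reach e k x y -> dist e x y <= k) /\ dist e x y < #|V|.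
Proof.
move=> cc; have [k kV rk] := reach_conn (cc x y).
have hP : has (fun k => reach e k x y) (iota 0 #|V|).
  by apply/hasP; exists k => //; rewrite mem_iota.
have fl : dist e x y < #|V| by have := hP; rewrite has_find size_iota.
split; first by have := nth_find 0 hP; rewrite nth_iota ?add0n.
split=> // j rj; rewrite leqNgt; apply/negP=> jd.
have := before_find 0 jd; rewrite nth_iota ?add0n ?rj //.
exact: ltn_trans jd fl.
Qed.

Lemma dist_reach (V : finType) (e : rel V) (cc : forall x y, connect e x y) x y :
  reach e (dist e x y) x y.
Proof. by case: (dist_spec x y cc). Qed.

Lemma dist_min (V : finType) (e : rel V) (cc : forall x y, connect e x y) x y k :
  reach e k x y -> dist e x y <= k.
Proof. by case: (dist_spec x y cc) => _ [h _]; apply: h. Qed.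

Lemma dist_tri (V : finType) (e : rel V) (cc : forall x y, connect e x y) x y z :
  dist e x z <= dist e x y + dist e y z.
Proof. apply: (dist_min cc); apply: reach_trans; apply: (dist_reach cc). Qed.

Lemma dist_sym (V : finType) (e : rel V) (cc : forall x y, connect e x y)
  (se : symmetric e) x y : dist e x y = dist e y x.
Proof.
apply/eqP; rewrite eqn_leq; apply/andP; split; apply: (dist_min cc);
  apply: reach_sym => //; apply: (dist_reach cc).
Qed.

Lemma dist_xx (V : finType) (e : rel V) (cc : forall x y, connect e x y) x :
  dist e x x = 0.
Proof. by apply/eqP; rewrite -leqn0; apply: (dist_min cc); rewrite /= eqxx. Qed.

Lemma dist_eq0 (V : finType) (e : rel V) (cc : forall x y, connect e x y) x y :
  dist e x y = 0 -> x = y.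
Proof. by move=> h; have := dist_reach cc x y; rewrite h => /eqP. Qed.

Lemma dist_adj (V : finType) (e : rel V) (cc : forall x y, connect e x y) x y :
  e x y -> x != y -> dist e x y = 1.
Proof.
move=> exy nxy; apply/eqP; rewrite eqn_leq (dist_min cc) ?reach1 //=.
rewrite lt0n; apply/negP=> /eqP/(dist_eq0 cc) h; by rewrite h eqxx in nxy.
Qed.

Lemma corona_sym (T U : finType) (eG : rel T) (eH : rel U) :
  symmetric eG -> symmetric eH -> symmetric (corona_rel eG eH).
Proof.
move=> sg sh [a|[a h]] [b|[b h']] //=; rewrite ?sg ?(eq_sym a b) //.
by rewrite sh.
Qed.

Lemma corona_conn (T U : finType) (eG : rel T) (eH : rel U) :
  connected_graph eG -> forall x y, connect (corona_rel eG eH) x y.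
Proof.
move=> cG.
have hG : forall a b, connect (corona_rel eG eH) (inl a) (inl b).
  move=> a b; case/connectP: (cG a b) => p pp ->.
  elim: p a pp => [|c p IH] a /=; first by rewrite connect0.
  case/andP=> ac pp; apply: connect_trans (IH _ pp); apply: connect1 => /=; exact: ac.
have hb : forall x, exists a, connect (corona_rel eG eH) x (inl a) /\
             connect (corona_rel eG eH) (inl a) x.
  case=> [a|[a h]]; exists a; first by rewrite connect0.
  by split; apply: connect1; rewrite /= eqxx.
move=> x y; have [a [xa _]] := hb x; have [b [_ by_]] := hb y.
exact: connect_trans xa (connect_trans (hG a b) by_).
Qed.

Definition inH (T U : finType) (u : T) (w : T + T * U) : bool :=
  if w is inr p then p.1 == u else false.

Lemma reach_leaf (T U : finType) (eG : rel T) (eH : rel U) u h k w :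
  ~~ inH u w -> reach (corona_rel eG eH) k.+1 w (inr (u, h)) ->
  reach (corona_rel eG eH) k w (inl u).
Proof.
elim: k w => [|k IH] w nw.
  rewrite /=; case/orP=> [/eqP wx|/existsP[z /andP[wz /eqP zx]]]; first by rewrite wx /= eqxx in nw.
  subst z; case: w nw wz => [a|[a h']] /=.
    by move=> _ /eqP ->.
  by move=> /negbTE -> .
rewrite [reach _ k.+2 _ _]/=; case/orP=> [/eqP wx|/existsP[z /andP[wz rz]]]; first by rewrite wx /= eqxx in nw.
case nz: (inH u z).
  case: z nz wz rz => [a|[a h']] //= /eqP -> wz _.
  case: w nw wz => [b|[b h'']] /=.
    by move=> _ /eqP ->; rewrite eqxx.
  by move=> /negbTE ->.
apply/orP; right; apply/existsP; exists z; rewrite wz; apply: IH => //; by rewrite nz.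
Qed.

Lemma dist_leaf (T U : finType) (eG : rel T) (eH : rel U)
  (cG : connected_graph eG) u h w : ~~ inH u w ->
  dist (corona_rel eG eH) w (inr (u, h)) = (dist (corona_rel eG eH) w (inl u)).+1.
Proof.
move=> nw; have cc := corona_conn eH cG.
apply/eqP; rewrite eqn_leq; apply/andP; split.
  rewrite -addn1; apply: leq_trans (dist_tri cc _ (inl u) _) _.
  by rewrite leq_add2l (dist_min cc) // reach1 //= eqxx.
have := dist_reach cc w (inr (u, h)).
case E: (dist _ w _) => [|k].
  move=> /= /eqP wx; by rewrite wx /= eqxx in nw.
by move/reach_leaf => /(_ nw) /(dist_min cc).
Qed.

Lemma not_geo (T U : finType) (eG : rel T) (eH : rel U)
  (sg : symmetric eG) (sh : symmetric eH) (cG : connected_graph eG) u h y z :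
  ~~ inH u y -> z != inr (u, h) -> ~~ on_geodesic (corona_rel eG eH) y z (inr (u, h)).
Proof.
move=> ny nz; have cc := corona_conn eH cG; have se := corona_sym sg sh.
rewrite /on_geodesic (dist_leaf eH cG h ny).
case iz: (inH u z).
  case: z nz iz => [//|[a h']] nz /= /eqP ea; subst a.
  rewrite (dist_leaf eH cG h' ny) addSn eqSS -{2}(addn0 (dist _ y _)) eqn_add2l.
  rewrite -lt0n lt0n; apply/negP => /eqP /(dist_eq0 cc) E.
  by rewrite -E eqxx in nz.
rewrite (dist_sym cc se (inr _)) (dist_leaf eH cG h) ?iz //.
rewrite neq_ltn; apply/orP; right; rewrite addSn addnS ltnS; idtac.
apply: leq_trans (leqnSn _); rewrite (dist_sym cc se z); exact: dist_tri.
Qed.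

Lemma geo_self (V : finType) (e : rel V) (cc : forall x y, connect e x y) y z :
  on_geodesic e y z z.
Proof. by rewrite /on_geodesic (dist_xx cc) addn0. Qed.

Lemma geo_L1 (T U : finType) (eG : rel T) (eH : rel U)
  (cG : connected_graph eG) a h y : ~~ inH a y ->
  on_geodesic (corona_rel eG eH) y (inr (a, h)) (inl a).
Proof.
move=> ny; have cc := corona_conn eH cG.
have d1 : dist (corona_rel eG eH) (inl a) (inr (a, h)) = 1 by apply: (dist_adj cc) => //=.
by rewrite /on_geodesic (dist_leaf eH cG h ny) d1 addn1.
Qed.

Lemma geo_L2 (T U : finType) (eG : rel T) (eH : rel U)
  (sg : symmetric eG) (sh : symmetric eH) (cG : connected_graph eG) a c h h' :
  a != c -> on_geodesic (corona_rel eG eH) (inr (c, h)) (inr (a, h')) (inl c).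
Proof.
move=> ac; have cc := corona_conn eH cG; have se := corona_sym sg sh.
have d1 : dist (corona_rel eG eH) (inr (c, h)) (inl c) = 1.
  by apply: (dist_adj cc); rewrite /= ?eqxx.
have d2 := dist_leaf eH cG h' (isT : ~~ inH a (inl c)).
have d3 : ~~ inH a (inr (c, h)) by rewrite /= eq_sym.
have d4 := dist_leaf eH cG h' d3.
have d5 : ~~ @inH T U c (inl a) by [].
have d6 := dist_leaf eH cG h d5.
rewrite /on_geodesic d1 d2 d4 (dist_sym cc se (inr (c, h)) (inl a)) d6 (dist_sym cc se (inl c)).
by rewrite add1n.
Qed.

Lemma maker_goalU (V : finType) (e : rel V) M v : maker_goal e M -> maker_goal e (v |: M).
Proof.
case/existsP=> S /andP[sub sr]; apply/existsP; exists S; rewrite sr andbT.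
by apply: subset_trans sub _; apply: subsetUr.
Qed.

Lemma maker_goal_wins (V : finType) (e : rel V) f M B t :
  maker_goal e M -> maker_wins_from e f M B t.
Proof.
elim: f M B t => [|f IH] M B t mg //=.
case: ifP => // /set0Pn [v vf]; case: t.
  by apply/existsP; exists v; rewrite vf IH // maker_goalU.
by apply/forallP=> w; apply/implyP=> _; apply: IH.
Qed.

Lemma breaker_block (V : finType) (e : rel V) (x y : V) f (M B : {set V}) t :
  (forall S, strong_resolving e S -> (x \in S) || (y \in S)) ->
  x \in B -> y \in B -> x \notin M -> y \notin M -> breaker_wins_from e f M B t.
Proof.
move=> blk; elim: f M B t => [|f IH] M B t xB yB xM yM.
- rewrite /=; apply/negP => /existsP [S /andP[sub sr]].
  case/orP: (blk S sr) => /(subsetP sub); by [rewrite (negbTE xM) | rewrite (negbTE yM)].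
rewrite /=; case: ifP => [_|/set0Pn [v vf]].
  apply/negP => /existsP [S /andP[sub sr]].
  case/orP: (blk S sr) => /(subsetP sub); by [rewrite (negbTE xM) | rewrite (negbTE yM)].
case: t.
  apply/forallP=> w; apply/implyP=> wf; apply: IH => //; rewrite in_setU1 negb_or ?xM ?yM andbT.
    by apply/eqP=> E; move: wf; rewrite -E in_setC in_setU xB orbT.
  by apply/eqP=> E; move: wf; rewrite -E in_setC in_setU yB orbT.
by apply/existsP; exists v; rewrite vf IH // in_setU1 ?xB ?yB orbT.
Qed.

Lemma bw_breaker (V : finType) (e : rel V) f M B v :
  v \in ~: (M :|: B) -> breaker_wins_from e f M (v |: B) true ->
  breaker_wins_from e f.+1 M B false.
Proof.
move=> vf h /=; case: ifP => [/eqP E|_]; first by move: vf; rewrite E inE.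
by apply/existsP; exists v; rewrite vf.
Qed.

Lemma bw_maker (V : finType) (e : rel V) f M B w :
  w \in ~: (M :|: B) ->
  (forall v, v \in ~: (M :|: B) -> breaker_wins_from e f (v |: M) B false) ->
  breaker_wins_from e f.+1 M B true.
Proof.
move=> wf h /=; case: ifP => [/eqP E|_]; first by move: wf; rewrite E inE.
by apply/forallP=> v; apply/implyP; apply: h.
Qed.

Lemma mw_maker (V : finType) (e : rel V) f M B v :
  v \in ~: (M :|: B) -> maker_wins_from e f (v |: M) B false ->
  maker_wins_from e f.+1 M B true.
Proof.
move=> vf h /=; case: ifP => [/eqP E|_]; first by move: vf; rewrite E inE.
by apply/existsP; exists v; rewrite vf.
Qed.

Lemma mw_breaker (V : finType) (e : rel V) f M B w :
  w \in ~: (M :|: B) ->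
  (forall v, v \in ~: (M :|: B) -> maker_wins_from e f M (v |: B) true) ->
  maker_wins_from e f.+1 M B false.
Proof.
move=> wf h /=; case: ifP => [/eqP E|_]; first by move: wf; rewrite E inE.
by apply/forallP=> v; apply/implyP; apply: h.
Qed.

Definition bp (V : finType) (e : rel V) (x y : V) :=
  forall S, strong_resolving e S -> (x \in S) || (y \in S).

Lemma free0 (V : finType) (x : V) : x \in ~: ((set0 : {set V}) :|: set0).
Proof. by rewrite setU0 in_setC in_set0. Qed.

Lemma freeU (V : finType) (x : V) (A B : {set V}) :
  x \in ~: (A :|: B) = (x \notin A) && (x \notin B).
Proof. by rewrite in_setC in_setU negb_or. Qed.

Lemma pick2 (V : finType) (y1 y2 v : V) (P : V -> Prop) : y1 != y2 -> P y1 -> P y2 ->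
  exists y, [/\ y != v, P y & (y == y1) || (y == y2)].
Proof.
move=> n12 p1 p2; case: (eqVneq y1 v) => [E|n1]; last by exists y1; rewrite eqxx.
by exists y2; rewrite -E eq_sym n12 eqxx orbT.
Qed.

Lemma BgameB (V : finType) (e : rel V) x y1 y2 : 3 <= #|V| ->
  y1 != y2 -> x != y1 -> x != y2 -> bp e x y1 -> bp e x y2 -> breaker_wins_Bgame e.
Proof.
move=> hV; have cV : #|V| = (#|V| - 3).+3 by rewrite -addn3 subnK.
move=> n12 nx1 nx2 b1 b2; rewrite /breaker_wins_Bgame cV.
apply: (bw_breaker (v := x)); first exact: free0.
apply: (bw_maker (w := y1)); first by rewrite freeU !inE ?orbF ?andbT eq_sym nx1.
move=> v; rewrite freeU !inE ?orbF ?andbT => nvx.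
have [y [yv by_ yy]] := @pick2 _ _ _ v (fun y => bp e x y) n12 b1 b2.
have yx : y != x by case/orP: yy => /eqP->; rewrite eq_sym.
apply: (bw_breaker (v := y)); first by rewrite freeU !inE ?orbF ?andbT yv yx.
apply: (@breaker_block _ _ x y); rewrite ?inE ?eqxx ?orbT ?orbF //; by rewrite ?(eq_sym x) ?yv ?nvx.
Qed.

Lemma MgameB (V : finType) (e : rel V) (w0 : V) : 4 <= #|V| ->
  (forall v, exists x y1 y2, [/\ y1 != y2, x != y1, x != y2, bp e x y1 & bp e x y2]
      /\ [/\ x != v, y1 != v & y2 != v]) ->
  breaker_wins_Mgame e.
Proof.
move=> hV; have cV : #|V| = (#|V| - 4).+4 by rewrite -addn4 subnK.
move=> H; rewrite /breaker_wins_Mgame cV.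
apply: (bw_maker (w := w0)); first exact: free0.
move=> v _; have [x [y1 [y2 [[n12 nx1 nx2 b1 b2] [xv y1v y2v]]]]] := H v.
apply: (bw_breaker (v := x)); first by rewrite freeU !inE ?orbF ?andbT xv.
apply: (bw_maker (w := y1)).
  by rewrite freeU !inE ?orbF ?andbT y1v eq_sym nx1.
move=> v2; rewrite freeU !inE !orbF => /andP[v2v v2x].
have [y [yv by_ yy]] := @pick2 _ _ _ v2 (fun y => bp e x y) n12 b1 b2.
have yv' : y != v by case/orP: yy => /eqP->.
have yx : y != x by case/orP: yy => /eqP->; rewrite eq_sym.
apply: (bw_breaker (v := y)); first by rewrite freeU !inE !orbF negb_or yv yv' yx.
apply: (@breaker_block _ _ x y); rewrite ?inE ?eqxx ?orbT ?orbF ?negb_or //.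
  by rewrite xv eq_sym v2x.
by rewrite yv yv'.
Qed.

Lemma sr_sub (V : finType) (e : rel V) (S M : {set V}) :
  strong_resolving e S -> S \subset M -> maker_goal e M.
Proof. by move=> sr sub; apply/existsP; exists S; rewrite sub sr. Qed.

Lemma Mgame_one (V : finType) (e : rel V) a : 1 <= #|V| ->
  strong_resolving e [set a] -> maker_wins_Mgame e.
Proof.
move=> hV; have cV : #|V| = (#|V| - 1).+1 by rewrite -addn1 subnK.
move=> sr; rewrite /maker_wins_Mgame cV; apply: (mw_maker (v := a)); first exact: free0.
apply: maker_goal_wins; apply: sr_sub sr _; by rewrite sub1set in_setU1 eqxx.
Qed.

Lemma Bgame_two (V : finType) (e : rel V) a b : 2 <= #|V| -> a != b ->
  strong_resolving e [set a] -> strong_resolving e [set b] -> maker_wins_Bgame e.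
Proof.
move=> hV; have cV : #|V| = (#|V| - 2).+2 by rewrite -addn2 subnK.
move=> ab sa sb; rewrite /maker_wins_Bgame cV; apply: (mw_breaker (w := a)); first exact: free0.
move=> v _; case: (eqVneq v a) => [->|va].
  apply: (mw_maker (v := b)); first by rewrite freeU !inE ?orbF ?andbT eq_sym ab.
  apply: maker_goal_wins; apply: sr_sub sb _; by rewrite sub1set in_setU1 eqxx.
apply: (mw_maker (v := a)); first by rewrite freeU !inE ?orbF ?andbT eq_sym va.
apply: maker_goal_wins; apply: sr_sub sa _; by rewrite sub1set in_setU1 eqxx.
Qed.

Lemma Mgame_three (V : finType) (e : rel V) a b c : 3 <= #|V| -> b != c -> a != b -> a != c ->
  strong_resolving e [set a; b] -> strong_resolving e [set a; c] -> maker_wins_Mgame e.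
Proof.
move=> hV; have cV : #|V| = (#|V| - 3).+3 by rewrite -addn3 subnK.
move=> bc ab ac sb sc; rewrite /maker_wins_Mgame cV; apply: (mw_maker (v := a)); first exact: free0.
apply: (mw_breaker (w := b)); first by rewrite freeU !inE ?orbF ?andbT eq_sym ab.
move=> v; rewrite freeU !inE !orbF => /andP[va _].
case: (eqVneq v b) => [->|vb].
  apply: (mw_maker (v := c)); first by rewrite freeU !inE ?orbF ?andbT eq_sym ac eq_sym bc.
  apply: maker_goal_wins; apply: sr_sub sc _.
  by apply/subsetP=> z; rewrite !in_setU1 !in_set1 => /orP[]->; rewrite ?orbT.
apply: (mw_maker (v := b)); first by rewrite freeU !inE ?orbF ?andbT eq_sym ab eq_sym vb.
apply: maker_goal_wins; apply: sr_sub sb _.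
by apply/subsetP=> z; rewrite !in_setU1 !in_set1 => /orP[]->; rewrite ?orbT.
Qed.

Lemma corona_bp (T U : finType) (eG : rel T) (eH : rel U)
  (sg : symmetric eG) (sh : symmetric eH) (cG : connected_graph eG) u v h h' :
  u != v -> bp (corona_rel eG eH) (inr (u, h)) (inr (v, h')).
Proof.
move=> uv S /forallP /(_ (inr (u, h))) /forallP /(_ (inr (v, h'))).
have nxy : inr (u, h) != inr (v, h') :> (T + T * U).
  by apply/negP => /eqP [E _]; rewrite E eqxx in uv.
rewrite nxy /= => /existsP [z /andP[zS g]].
case: (eqVneq z (inr (u, h))) => [E|zx]; first by rewrite -E zS.
case: (eqVneq z (inr (v, h'))) => [E|zy]; first by rewrite -E zS orbT.
have n1 : ~~ inH u (inr (v, h') : T + T * U) by rewrite /= eq_sym.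
have n2 : ~~ inH v (inr (u, h) : T + T * U) by rewrite /=.
by rewrite (negbTE (not_geo sg sh cG n1 zx)) (negbTE (not_geo sg sh cG n2 zy)) in g.
Qed.

Ltac gs eH cG sg sh :=
  solve [ apply/orP; left; apply: geo_self; exact: corona_conn
        | apply/orP; right; apply: geo_self; exact: corona_conn
        | apply/orP; left; apply: (geo_L1 eH cG); by rewrite /= ?eqxx
        | apply/orP; right; apply: (geo_L1 eH cG); by rewrite /= ?eqxx
        | apply/orP; left; apply: (geo_L2 sg sh cG); by []
        | apply/orP; right; apply: (geo_L2 sg sh cG); by [] ].

Lemma SR2 (T U : finType) (eG : rel T) (eH : rel U)
  (sg : symmetric eG) (sh : symmetric eH) (cG : connected_graph eG) a b h0 :
  (forall t, (t == a) || (t == b)) -> (forall h, h == h0) -> a != b ->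
  strong_resolving (corona_rel eG eH) [set inr (a, h0)].
Proof.
move=> hT hU ab; have ba : b != a by rewrite eq_sym.
have ab' := negbTE ab; have ba' := negbTE ba.
apply/forallP => x; apply/forallP => y; apply/implyP => nxy.
apply/existsP; exists (inr (a, h0)); rewrite in_set1 eqxx /=.
case: x nxy => [t|[t h]]; [|move: (hU h) => /eqP ->];
  case/orP: (hT t) => /eqP ->;
  case: y => [s|[s h']]; try (move: (hU h') => /eqP ->);
  case/orP: (hT s) => /eqP -> nxy; rewrite ?eqxx in nxy => //; gs eH cG sg sh.
Qed.

Lemma SR3 (T U : finType) (eG : rel T) (eH : rel U)
  (sg : symmetric eG) (sh : symmetric eH) (cG : connected_graph eG) a b c h0 :
  (forall t, [|| t == a, t == b | t == c]) -> (forall h, h == h0) ->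
  a != b -> a != c -> b != c ->
  strong_resolving (corona_rel eG eH) [set inr (a, h0); inr (b, h0)].
Proof.
move=> hT hU ab ac bc; have ba : b != a by rewrite eq_sym.
have ca : c != a by rewrite eq_sym.
have cb : c != b by rewrite eq_sym.
apply/forallP => x; apply/forallP => y; apply/implyP => nxy.
case: x nxy => [t|[t h]]; [|move: (hU h) => /eqP ->];
  case/or3P: (hT t) => /eqP ->;
  case: y => [s|[s h']]; try (move: (hU h') => /eqP ->);
  case/or3P: (hT s) => /eqP -> nxy; rewrite ?eqxx in nxy => //;
  first [ apply/existsP; exists (inr (a, h0)); rewrite !inE eqxx /=; gs eH cG sg sh
        | apply/existsP; exists (inr (b, h0)); rewrite !inE eqxx ?orbT /=; gs eH cG sg sh ].
Qed.

Lemma cardV (T U : finType) : #|{: T + T * U}| = #|T| + #|T| * #|U|.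
Proof. by rewrite card_sum card_prod. Qed.

Lemma my_enum2 (T : finType) : #|T| = 2 -> exists a b : T, a != b /\ forall t, (t == a) || (t == b).
Proof.
rewrite cardT; have u := enum_uniq T; have m := mem_enum T.
case E: (enum T) u => [|a [|b [|c s]]] //= /andP[ab _] _; exists a, b.
split; first by rewrite inE in ab.
by move=> t; have := m t; rewrite E !inE ?orbF.
Qed.

Lemma my_enum3 (T : finType) : #|T| = 3 -> exists a b c : T,
  [/\ a != b, a != c, b != c & forall t, [|| t == a, t == b | t == c]].
Proof.
rewrite cardT; have u := enum_uniq T; have m := mem_enum T.
case E: (enum T) u => [|a [|b [|c [|d s]]]] //= /and3P[ab bc _] _; exists a, b, c.
move: ab bc; rewrite !inE negb_or => /andP[-> ->] ->; split => //.
by move=> t; have := m t; rewrite E !inE ?orbF.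
Qed.

Lemma my_enum4 (T : finType) : 4 <= #|T| -> exists a b c d : T,
  [/\ a != b, a != c, a != d, b != c & (b != d) && (c != d)].
Proof.
rewrite cardT; have u := enum_uniq T.
case E: (enum T) u => [|a [|b [|c [|d s]]]] //= /and4P[ab bc cd _] _; exists a, b, c, d.
by move: ab bc cd; rewrite !inE !negb_or => /and4P[-> -> -> _] /and3P[-> -> _] /andP[-> _].
Qed.

Lemma my_enum1 (U : finType) : #|U| = 1 -> exists h0 : U, forall h, h == h0.
Proof.
rewrite cardT; have m := mem_enum U.
case E: (enum U) => [|a [|b s]] //= _; exists a.
by move=> t; have := m t; rewrite E !inE.
Qed.

Lemma my_enumge2 (U : finType) : 2 <= #|U| -> exists h1 h2 : U, h1 != h2.
Proof.
rewrite cardT; have u := enum_uniq U.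
case E: (enum U) u => [|a [|b s]] //= /andP[ab _] _; exists a, b.
by move: ab; rewrite !inE negb_or => /andP[].
Qed.

Lemma sel_m2 (T U : finType) (eG : rel T) (eH : rel U)
  (sg : symmetric eG) (sh : symmetric eH) (cG : connected_graph eG)
  (c1 c2 : T) (h1 h2 : U) (v : T + T * U) :
  c1 != c2 -> h1 != h2 -> ~~ inH c2 v ->
  exists x y1 y2, [/\ y1 != y2, x != y1, x != y2, bp (corona_rel eG eH) x y1 & bp (corona_rel eG eH) x y2]
      /\ [/\ x != v, y1 != v & y2 != v].
Proof.
move=> c12 h12 nv.
have ny : forall h, inr (c2, h) != v.
  by move=> h; apply/negP => /eqP E; rewrite -E /= eqxx in nv.
have d1 : forall h h', inr (c1, h) != inr (c2, h') :> T + T * U.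
  by move=> h h'; apply/negP => /eqP [E]; rewrite E eqxx in c12.
have d2 : inr (c2, h1) != inr (c2, h2) :> T + T * U.
  by apply/negP => /eqP [E]; rewrite E eqxx in h12.
case: (eqVneq (inr (c1, h1)) v) => [E|n1].
  exists (inr (c1, h2)), (inr (c2, h1)), (inr (c2, h2)); split; split; rewrite ?ny //.
  - exact: corona_bp.
  - exact: corona_bp.
  - by rewrite -E; apply/negP => /eqP [E']; rewrite E' eqxx in h12.
exists (inr (c1, h1)), (inr (c2, h1)), (inr (c2, h2)); split; split; rewrite ?ny //.
- exact: corona_bp.
- exact: corona_bp.
Qed.

Lemma sel3 (T U : finType) (eG : rel T) (eH : rel U)
  (sg : symmetric eG) (sh : symmetric eH) (cG : connected_graph eG)
  (c1 c2 c3 : T) (h0 : U) (v : T + T * U) :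
  c1 != c2 -> c1 != c3 -> c2 != c3 -> ~~ inH c1 v -> ~~ inH c2 v -> ~~ inH c3 v ->
  exists x y1 y2, [/\ y1 != y2, x != y1, x != y2, bp (corona_rel eG eH) x y1 & bp (corona_rel eG eH) x y2]
      /\ [/\ x != v, y1 != v & y2 != v].
Proof.
move=> c12 c13 c23 n1 n2 n3.
have ny : forall c h, ~~ inH c v -> inr (c, h) != v.
  by move=> c h nv; apply/negP => /eqP E; rewrite -E /= eqxx in nv.
have d : forall c c' h, c != c' -> inr (c, h) != inr (c', h) :> T + T * U.
  by move=> c c' h cc; apply/negP => /eqP [E]; rewrite E eqxx in cc.
exists (inr (c1, h0)), (inr (c2, h0)), (inr (c3, h0)); split; split; rewrite ?ny ?d //;
  exact: corona_bp.
Qed.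

Lemma case_m2 (T U : finType) (eG : rel T) (eH : rel U)
  (sg : symmetric eG) (sh : symmetric eH) (cG : connected_graph eG) (a b : T) :
  a != b -> 2 <= #|U| -> outcome_B (corona_rel eG eH).
Proof.
move=> ab hU; have [h1 [h2 h12]] := my_enumge2 hU.
have c4 : 4 <= #|{: T + T * U}|.
  rewrite cardV; have : 2 <= #|T| by apply/card_gt1P; exists a, b.
  nia.
split.
  apply: (@MgameB _ _ (inl a)); first exact: c4.
  move=> v; case: (boolP (inH b v)) => hb.
    apply: (@sel_m2 T U eG eH sg sh cG b a h1 h2 v); first by rewrite eq_sym.
      by [].
    by case: v hb => [//|[t h]] /= /eqP ->; rewrite eq_sym.
  exact: (@sel_m2 T U eG eH sg sh cG a b h1 h2 v).
- apply: (@BgameB _ _ (inr (a, h1)) (inr (b, h1)) (inr (b, h2))).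
  + by apply: leq_trans c4.
  + by apply/negP => /eqP [E]; rewrite E eqxx in h12.
  + by apply/negP => /eqP [E]; rewrite E eqxx in ab.
  + by apply/negP => /eqP [E]; rewrite E eqxx in ab.
  + exact: corona_bp.
  + exact: corona_bp.
Qed.

Lemma case_B3 (T U : finType) (eG : rel T) (eH : rel U)
  (sg : symmetric eG) (sh : symmetric eH) (cG : connected_graph eG) (a b c : T) (h0 : U) :
  3 <= #|T| -> a != b -> a != c -> b != c -> breaker_wins_Bgame (corona_rel eG eH).
Proof.
move=> h3 ab ac bc.
have c4 : 3 <= #|{: T + T * U}|.
  rewrite cardV.
  have : 1 <= #|U| by apply/card_gt0P; exists h0.
  nia.
apply: (@BgameB _ _ (inr (a, h0)) (inr (b, h0)) (inr (c, h0))).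
+ by apply: leq_trans c4.
+ by apply/negP => /eqP [E]; rewrite E eqxx in bc.
+ by apply/negP => /eqP [E]; rewrite E eqxx in ab.
+ by apply/negP => /eqP [E]; rewrite E eqxx in ac.
+ exact: corona_bp.
+ exact: corona_bp.
Qed.

Theorem mainTheorem9 (T U : finType) (eG : rel T) (eH : rel U)
  (sG : simple_graph eG) (sH : simple_graph eH) (cG : connected_graph eG)
  (hn : 2 <= #|T|) (hm : 1 <= #|U|) :
  (4 <= #|T| -> outcome_B (corona_rel eG eH)) /\
  (#|T| = 3 ->
     (#|U| = 1 -> outcome_N (corona_rel eG eH)) /\
     (2 <= #|U| -> outcome_B (corona_rel eG eH))) /\
  (#|T| = 2 ->
     (#|U| = 1 -> outcome_M (corona_rel eG eH)) /\
     (2 <= #|U| -> outcome_B (corona_rel eG eH))).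
Proof.
case: sG => sg _; case: sH => sh _.
have [h0 _] : exists h0 : U, h0 \in U by apply/card_gt0P.
split; [|split].
- move=> h4; have [a [b [c [d [ab ac ad bc /andP[bd cd]]]]]] := my_enum4 h4.
  split; last exact: (case_B3 sg sh cG h0 (leq_trans (isT : 3 <= 4) h4) ab ac bc).
  have c4 : 4 <= #|{: T + T * U}| by rewrite cardV; nia.
  apply: (@MgameB _ _ (inl a)); first exact: c4.
  move=> v; case: v => [t|[t h]].
    by apply: (sel3 sg sh cG h0 ab ac bc).
  case: (eqVneq t a) => [->|ta].
    by apply: (sel3 sg sh cG h0 bc bd cd); rewrite //= eq_sym.
  case: (eqVneq t b) => [->|tb].
    by apply: (sel3 sg sh cG h0 ac ad cd); rewrite //= eq_sym.
  case: (eqVneq t c) => [->|tc].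
    by apply: (sel3 sg sh cG h0 ab ad bd); rewrite //= eq_sym.
  by apply: (sel3 sg sh cG h0 ab ac bc); rewrite //= eq_sym.
- move=> h3; have [a [b [c [ab ac bc hT]]]] := my_enum3 h3; split.
    move=> h1; have [h0' hU] := my_enum1 h1; split; last exact: (case_B3 sg sh cG h0 (eq_leq (esym h3)) ab ac bc).
    have c6 : #|{: T + T * U}| = 6 by rewrite cardV h3 h1.
    apply: (@Mgame_three _ _ (inr (a, h0')) (inr (b, h0')) (inr (c, h0'))).
    + by rewrite c6.
    + by apply/negP => /eqP [E]; rewrite E eqxx in bc.
    + by apply/negP => /eqP [E]; rewrite E eqxx in ab.
    + by apply/negP => /eqP [E]; rewrite E eqxx in ac.
    + exact: SR3.
    + apply: (@SR3 T U eG eH sg sh cG a c b h0') => //; last by rewrite eq_sym.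
      by move=> t; case/or3P: (hT t) => ->; rewrite ?orbT.
  by move=> hU; apply: (@case_m2 T U eG eH sg sh cG a b ab hU).
- move=> h2; have [a [b [ab hT]]] := my_enum2 h2; split.
    move=> h1; have [h0' hU] := my_enum1 h1.
    have c4 : #|{: T + T * U}| = 4 by rewrite cardV h2 h1.
    split.
      apply: (@Mgame_one _ _ (inr (a, h0'))); first by rewrite c4.
      exact: SR2.
    apply: (@Bgame_two _ _ (inr (a, h0')) (inr (b, h0'))); first by rewrite c4.
    + by apply/negP => /eqP [E]; rewrite E eqxx in ab.
    + exact: SR2.
    + apply: (@SR2 T U eG eH sg sh cG b a h0') => //; last by rewrite eq_sym.
      by move=> t; rewrite orbC.
  by move=> hU; apply: (@case_m2 T U eG eH sg sh cG a b ab hU).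
Qed.
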